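(* Let $\sigma\le\tau$ be stopping times with values in $\{0,\ldots,n\}$, and let $Y^{up},Y^{low}$ be adapted integrable real-valued processes such that for every $i$ with $\sigma\le i<\tau$, $$Y^{up}_i\ge\max\{S_i,\;E_i[Y^{up}_{i+1}]+f(i,Y^{up}_i,E_i[\beta_{i+1}Y^{up}_{i+1}])\Delta_i\},$$ $$Y^{low}_i\le\max\{S_i,\;E_i[Y^{low}_{i+1}]+f(i,Y^{low}_i,E_i[\beta_{i+1}Y^{low}_{i+1}])\Delta_i\},$$ and $Y^{up}_\tau\ge Y^{low}_\tau$. Then $Y^{low}_i\le Y^{up}_i$ almost surely on $\{\sigma\le i\le\tau\}$ for every $i=0,\ldots,n$.
   Context: Standing setting: $n\ge 1$ and $D\ge 1$ are integers; $(\Omega,\mathcal F,(\mathcal F_i)_{i=0,\ldots,n},P)$ is a filtered probability space and $E_i[\cdot]=E[\cdot\mid\mathcal F_i]$. The constants $\Delta_0,\ldots,\Delta_{n-1}$ are positive reals. $S=(S_i)_{i=0,\ldots,n}$ is an adapted process with values in $\mathbb R\cup\{-\infty\}$, $S_n$ real-valued, with $\sum_{i=0}^{n-1}E[|S_i\mathbf 1_{\{S_i>-\infty\}}|]+E[|S_n|]<\infty$. The random field $f:\Omega\times\{0,\ldots,n-1\}\times\mathbb R\times\mathbb R^D\to\mathbb R$ is measurable, $f(\cdot,i,y,z)$ is $\mathcal F_i$-measurable for every $(y,z)$ (the dependence on $\omega$ is suppressed), $\sum_{i=0}^{n-1}E[|f(i,0,0)|]<\infty$, and there are adapted nonnegative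 processes $\alpha^{(0)},\ldots,\alpha^{(D)}$ with $|f(i,y,z)-f(i,y',z')|\le\alpha^{(0)}_i|y-y'|+\sum_{d=1}^D\alpha^{(d)}_i|z_d-z'_d|$ for all $(y,z),(y',z')\in\mathbb R\times\mathbb R^D$. $\beta=(\beta_i)_{i=1,\ldots,n}$ is a bounded adapted $\mathbb R^D$-valued process, and for $i=0,\ldots,n-1$ almost surely $\alpha^{(0)}_i<1/\Delta_i$ and $\sum_{d=1}^D\alpha^{(d)}_i|\beta_{d,i+1}|\le 1/\Delta_i$. *)

(* Defs.v *)
From HB Require Import structures.
From mathcomp Require Import all_boot all_order all_algebra.
From mathcomp Require Import all_classical all_reals all_analysis.
From mathcomp Require Import measurable_realfun.
Set Implicit Arguments. Unset Strict Implicit. Unset Printing Implicit Defensive.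
Import Order.TTheory GRing.Theory Num.Theory.
Local Open Scope classical_set_scope.
Local Open Scope ring_scope.

Definition measurable_wrt {d} {T : measurableType d} {d'} {U : measurableType d'}
  (G : set (set T)) (X : T -> U) : Prop :=
  forall B : set U, measurable B -> G (X @^-1` B).

Definition filtration {d} {T : measurableType d} (n : nat)
  (F : nat -> set (set T)) : Prop :=
  (forall i, (i <= n)%N -> sigma_algebra setT (F i) /\ F i `<=` measurable) /\
  (forall i j, (i <= j <= n)%N -> F i `<=` F j).

Definition stopping_time {d} {T : measurableType d} (n : nat)
  (F : nat -> set (set T)) (tau : T -> nat) : Prop :=
  (forall x, (tau x <= n)%N) /\ (forall i, (i <= n)%N -> F i [set x | (tau x <= i)%N]).

Definition is_condexp {d} {T : measurableType d} {R : realType}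
  (mu : probability T R) (G : set (set T)) (X Y : T -> R) : Prop :=
  measurable_wrt G Y /\ mu.-integrable setT (EFin \o Y) /\
  (forall A, G A -> (\int[mu]_(x in A) (Y x)%:E = \int[mu]_(x in A) (X x)%:E)%E).

Definition emeasurable_wrt {d} {T : measurableType d} {R : realType}
  (G : set (set T)) (X : T -> \bar R) : Prop :=
  forall B : set (\bar R), measurable B -> G (X @^-1` B).

(* Main.v *)
Require Import Defs.
From HB Require Import structures.
From mathcomp Require Import all_boot all_order all_algebra.
From mathcomp Require Import all_classical all_reals all_analysis.
From mathcomp Require Import measurable_realfun.
From mathcomp Require Import ring lra.
Import Order.TTheory GRing.Theory Num.Theory.
Local Open Scope classical_set_scope.
Local Open Scope ring_scope.
Set Implicit Arguments. Unset Strict Implicit. Unset Printing Implicit Defensive.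

Section bridge.
Context d (T : measurableType d) (R : realType).
Variable G : set (set T).
Hypothesis sG : sigma_algebra setT G.

Lemma gsetE (A : set T) : G A <-> measurable (A : set (g_sigma_algebraType G)).
Proof. by rewrite measurable_g_measurableTypeE. Qed.

Lemma wrt_mfun (X : T -> R) :
  measurable_wrt G X -> measurable_fun [set: g_sigma_algebraType G] X.
Proof. by move=> h _ B mB; rewrite setTI; apply/gsetE; exact: h. Qed.

Lemma mfun_wrt (X : T -> R) :
  measurable_fun [set: g_sigma_algebraType G] X -> measurable_wrt G X.
Proof. by move=> h B mB; apply/gsetE; rewrite -[_ @^-1` _]setTI; exact: h. Qed.

Lemma wrt_meas (subG : G `<=` measurable) (X : T -> R) :
  measurable_wrt G X -> measurable_fun [set: T] X.
Proof. by move=> h _ B mB; rewrite setTI; apply: subG; exact: h. Qed.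

Lemma gset_le (f g : g_sigma_algebraType G -> R) :
  measurable_fun setT f -> measurable_fun setT g -> G [set x | f x <= g x].
Proof.
move=> mf mg; apply/gsetE.
have := measurable_fun_ler mf mg measurableT (Y:=[set true]).
by rewrite setTI; apply.
Qed.

Lemma gset_lt (f g : g_sigma_algebraType G -> R) :
  measurable_fun setT f -> measurable_fun setT g -> G [set x | f x < g x].
Proof.
move=> mf mg; apply/gsetE.
have := measurable_fun_ltr mf mg measurableT (Y:=[set true]).
by rewrite setTI; apply.
Qed.
End bridge.
Section inth.
Context d (T : measurableType d) (R : realType) (mu : {measure set T -> \bar R}).

Lemma null_pos (E : set T) (u : T -> R) : measurable E -> measurable_fun E u ->
  (forall x, E x -> 0 < u x) -> (\int[mu]_(x in E) (u x)%:E <= 0)%E ->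
  {ae mu, forall x, ~ E x}.
Proof.
move=> mE mU upos hle.
have h0 : (\int[mu]_(x in E) `|(EFin \o u) x| = 0)%E.
  rewrite (eq_integral (fun x => (u x)%:E)); last first.
    by move=> x /set_mem Ex; rewrite /= ger0_norm // ltW // upos.
  apply/eqP; rewrite eq_le hle integral_ge0 // => x Ex.
  by rewrite lee_fin ltW // upos.
have := (ae_eq_integral_abs mu mE (f := EFin \o u)).
move=> /(_ (proj2 (measurable_EFinP _ _) mU)) [/(_ h0) h _].
apply: filterS h => x /= h Ex.
by have := h Ex => -[] u0; have := upos _ Ex; rewrite u0 ltxx.
Qed.

Lemma ae_le_int (E : set T) (f g : T -> R) : measurable E ->
  mu.-integrable E (EFin \o f) -> mu.-integrable E (EFin \o g) ->
  {ae mu, forall x, E x -> f x <= g x} ->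
  (\int[mu]_(x in E) (f x)%:E <= \int[mu]_(x in E) (g x)%:E)%E.
Proof.
move=> mE iF iG [N [mN N0 sN]].
rewrite (negligible_integral mN mE iF N0) (negligible_integral mN mE iG N0).
have mEN : measurable (E `\` N) by exact: measurableD.
apply: le_integral => //.
- exact: integrableS iF.
- exact: integrableS iG.
move=> x /set_mem [Ex Nx]; rewrite lee_fin.
apply: contrapT => nh; apply: Nx; apply: sN => /= h; apply: nh; exact: h.
Qed.

Definition EqI (E : set T) (f g : T -> R) :=
  [/\ mu.-integrable E (EFin \o f), mu.-integrable E (EFin \o g) &
      (\int[mu]_(x in E) (f x)%:E = \int[mu]_(x in E) (g x)%:E)%E].

Lemma EqI_ext E f g f' g' : (forall x, f x = f' x) -> (forall x, g x = g' x) ->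
  EqI E f g -> EqI E f' g'.
Proof.
move=> ef eg; rewrite (_ : f = f'); last exact: funext.
by rewrite (_ : g = g'); last exact: funext.
Qed.

Lemma int_add E (f1 f2 : T -> R) : measurable E ->
  mu.-integrable E (EFin \o f1) -> mu.-integrable E (EFin \o f2) ->
  mu.-integrable E (EFin \o (f1 \+ f2)) /\
  (\int[mu]_(x in E) ((f1 \+ f2) x)%:E = \int[mu]_(x in E) (f1 x)%:E + \int[mu]_(x in E) (f2 x)%:E)%E.
Proof.
move=> mE i1 i2.
have e : EFin \o (f1 \+ f2) = (EFin \o f1) \+ (EFin \o f2).
  by apply: funext => x /=; rewrite EFinD.
split; first by rewrite e; exact: integrableD.
rewrite -(integralD_EFin mE i1 i2).
by apply: eq_integral => x _; rewrite /= EFinD.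
Qed.

Lemma int_scale E (f : T -> R) (c : R) : measurable E ->
  mu.-integrable E (EFin \o f) ->
  mu.-integrable E (EFin \o (fun x => c * f x)) /\
  (\int[mu]_(x in E) (c * f x)%:E = c%:E * \int[mu]_(x in E) (f x)%:E)%E.
Proof.
move=> mE i1.
have e : EFin \o (fun x => c * f x) = (fun x => c%:E * (EFin \o f) x)%E.
  by apply: funext => x /=; rewrite EFinM.
split; first by rewrite e; exact: integrableZl.
rewrite -(integralZl mE i1).
by apply: eq_integral => x _; rewrite /= EFinM.
Qed.

Lemma EqI_add E f1 g1 f2 g2 : measurable E -> EqI E f1 g1 -> EqI E f2 g2 ->
  EqI E (f1 \+ f2) (g1 \+ g2).
Proof.
move=> mE [i1 j1 e1] [i2 j2 e2].
have [a1 a2] := int_add mE i1 i2; have [b1 b2] := int_add mE j1 j2.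
by split => //; rewrite a2 b2 e1 e2.
Qed.

Lemma EqI_scale E f g c : measurable E -> EqI E f g ->
  EqI E (fun x => c * f x) (fun x => c * g x).
Proof.
move=> mE [i1 j1 e1].
have [a1 a2] := int_scale c mE i1; have [b1 b2] := int_scale c mE j1.
by split => //; rewrite a2 b2 e1.
Qed.

Lemma EqI_sub E f1 g1 f2 g2 : measurable E -> EqI E f1 g1 -> EqI E f2 g2 ->
  EqI E (f1 \- f2) (g1 \- g2).
Proof.
move=> mE h1 h2; have h3 := EqI_scale (-1) mE h2.
apply: EqI_ext (EqI_add mE h1 h3) => x /=; by rewrite mulN1r.
Qed.

Lemma EqI0 E : EqI E (fun=> 0) (fun=> 0).
Proof. by split => //; exact: integrable0. Qed.

Lemma EqI_sum E (I : Type) (s : seq I) (f g : I -> T -> R) : measurable E ->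
  (forall k, EqI E (f k) (g k)) ->
  EqI E (fun x => \sum_(k <- s) f k x) (fun x => \sum_(k <- s) g k x).
Proof.
move=> mE h; elim: s => [|k s ih].
  by apply: EqI_ext (EqI0 E) => x; rewrite big_nil.
by apply: EqI_ext (EqI_add mE (h k) ih) => x /=; rewrite big_cons.
Qed.

End inth.
Lemma ae_countable d (T : measurableType d) (R : realType) (mu : {measure set T -> \bar R})
  (I : countType) (P : I -> T -> Prop) :
  (forall i, {ae mu, forall x, P i x}) -> {ae mu, forall x, forall i, P i x}.
Proof.
move=> h.
have : {ae mu, forall x, forall n : nat,
    match unpickle n with Some i => P i x | None => True end}.
  apply: ae_foralln => n; case: (unpickle n) => [i|]; first exact: h.
  exact: aeW.
apply: filterS => x hx i; have := hx (pickle i); by rewrite pickleK.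
Qed.

Lemma condexp_EqI d (T : measurableType d) (R : realType) (mu : probability T R)
  (G : set (set T)) (X Y : T -> R) (E : set T) :
  G `<=` measurable -> is_condexp mu G X Y -> mu.-integrable setT (EFin \o X) ->
  G E -> EqI mu E Y X.
Proof.
move=> subG [_ [iY hY]] iX GE; have mE := subG _ GE.
split; [exact: integrableS iY | exact: integrableS iX | exact: hY].
Qed.
Lemma abs_cell (R : realType) (r t eps : R) : 0 < eps -> 0 <= t -> r <= t -> t < r + eps ->
  `|r| <= t + eps.
Proof.
move=> e0 t0 rt tr; case: (lerP 0 r) => h.
  by rewrite ger0_norm //; lra.
by rewrite ltr0_norm //; lra.
Qed.

Lemma alg_h (R : realType) (n : nat) (eps Dl Cp xl xu : R) (lam bb aa : 'I_n -> R) :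
  0 < eps -> 0 < Dl -> 0 <= Cp -> xl <= xu ->
  (forall k, `|bb k| <= Cp) -> (forall k, 0 <= aa k) ->
  (forall k, `|lam k| <= Dl * aa k + eps) ->
  \sum_(k < n) aa k * `|bb k| <= 1 / Dl ->
  (xl - xu) + \sum_(k < n) lam k * (bb k * xl - bb k * xu)
    - eps * (n%:R * Cp) * `|xl - xu| <= 0.
Proof.
move=> e0 D0 C0 xlu hb ha hl hs.
have e1 : \sum_(k < n) lam k * (bb k * xl - bb k * xu) =
    (\sum_(k < n) lam k * bb k) * (xl - xu).
  by rewrite big_distrl; apply: eq_bigr => k _ /=; ring.
have e2 : 0 <= \sum_(k < n) (lam k * bb k + (Dl * (aa k * `|bb k|) + eps * Cp)).
  apply: sumr_ge0 => k _.
  have h1 : `|lam k * bb k| <= Dl * (aa k * `|bb k|) + eps * Cp.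
    rewrite normrM.
    have := hl k; have := hb k; have := ha k; have := normr_ge0 (bb k);
      have := normr_ge0 (lam k); nra.
  have := ler_norm (- (lam k * bb k)); rewrite normrN; lra.
rewrite big_split big_split /= -mulr_sumr sumr_const card_ord in e2.
have e3 : Dl * \sum_(k < n) aa k * `|bb k| <= 1.
  apply: le_trans (ler_wpM2l (ltW D0) hs) _.
  by rewrite div1r mulfV ?gt_eqF.
rewrite e1 ler0_norm ?subr_le0 //.
set s := \sum_(k < n) lam k * bb k in e2 *.
set t := \sum_(k < n) aa k * `|bb k| in e2 e3 *.
rewrite -mulr_natl in e2.
have dx : xl - xu <= 0 by rewrite subr_le0.
have : 0 <= 1 + s + eps * (n%:R * Cp) by lra.
move: dx; set z := xl - xu; nra.
Qed.
Section step.
Context d (T : measurableType d) (R : realType) (mu : probability T R).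
Context (G : set (set T)) (sG : sigma_algebra setT G) (subG : G `<=` measurable).
Context (CE : (T -> R) -> T -> R).
Context (hCE : forall X, mu.-integrable setT (EFin \o X) -> is_condexp mu G X (CE X)).
Context (Dn : nat) (A : set T) (GA : G A).
Context (Xl Xu : T -> R).
Context (iXl : mu.-integrable setT (EFin \o Xl)) (iXu : mu.-integrable setT (EFin \o Xu)).
Context (hD : {ae mu, forall x, A x -> Xl x <= Xu x}).
Context (b : 'I_Dn -> T -> R) (mb : forall k, measurable_fun setT (b k)).
Context (C : R) (hC : forall k x, `|b k x| <= C).
Context (a : 'I_Dn -> T -> R) (ma : forall k, measurable_wrt G (a k))
  (a_ge0 : forall k x, 0 <= a k x).
Context (Dl : R) (Dl_gt0 : 0 < Dl).
Context (hab : {ae mu, forall x, \sum_(k < Dn) a k x * `|b k x| <= 1 / Dl}).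

Let Cp := `|C|.
Let K := Dn%:R * Cp.
Let W k x := CE (fun y => b k y * Xl y) x - CE (fun y => b k y * Xu y) x.
Let Q := CE (fun y => `|Xl y - Xu y|).

Let iB (X : T -> R) k : mu.-integrable setT (EFin \o X) ->
  mu.-integrable setT (EFin \o (fun y => b k y * X y)).
Proof.
move=> iX.
have hb : [bounded b k x | x in [set: T]].
  exists Cp; split; first exact: num_real.
  move=> M CM x _; apply: le_trans (hC k x) _; apply: ltW.
  by apply: le_lt_trans CM; exact: ler_norm.
have h := integrableMl measurableT iX (mb k) hb.
apply: eq_integrable h => // x _ /=.
by rewrite -EFinM mulrC.
Qed.

Let iQ : mu.-integrable setT (EFin \o (fun y => `|Xl y - Xu y|)).
Proof.
have h := integrableB measurableT iXl iXu.
by have := integrable_abse h; apply: eq_integrable.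
Qed.

Let mCE X : mu.-integrable setT (EFin \o X) ->
  measurable_fun [set: g_sigma_algebraType G] (CE X).
Proof. by move=> iX; case: (hCE iX) => h _; exact: wrt_mfun. Qed.

Let mW k : measurable_fun [set: g_sigma_algebraType G] (W k).
Proof. by apply: measurable_funB; apply: mCE; exact: iB. Qed.

Section cell.
Variable eps : R.
Hypothesis eps_gt0 : 0 < eps.

Definition cellT := {ffun 'I_Dn -> int * bool}.
Let vv (c : cellT) k : R := ((c k).1)%:~R.
Let ss (c : cellT) k : R := if (c k).2 then 1 else -1.
Let lam c k := eps * vv c k * ss c k.
Let Lc c x := (CE Xl x - CE Xu x) + \sum_(k < Dn) lam c k * W k x.
Let cellk c k := [set x | eps * vv c k <= Dl * a k x] `&`
  [set x | Dl * a k x < eps * (vv c k + 1)] `&` [set x | 0 <= ss c k * W k x].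
Let Bc c := A `&` \bigcap_(k in setT) cellk c k.

Let GBc c : G (Bc c).
Proof.
apply/(gsetE sG); apply: measurableI; first exact/(gsetE sG).
apply: fin_bigcap_measurable; first exact: finite_finset.
move=> k _; apply: measurableI; first apply: measurableI.
- apply/(gsetE sG).
  apply: (@gset_le _ _ _ _ sG (fun=> eps * vv c k) (fun x => Dl * a k x)).
    exact: measurable_cst.
  by apply: measurable_funM; [exact: measurable_cst | exact: wrt_mfun].
- apply/(gsetE sG).
  apply: (@gset_lt _ _ _ _ sG (fun x => Dl * a k x) (fun=> eps * (vv c k + 1))).
    by apply: measurable_funM; [exact: measurable_cst | exact: wrt_mfun].
  exact: measurable_cst.
- apply/(gsetE sG).
  apply: (@gset_le _ _ _ _ sG (fun=> 0) (fun x => ss c k * W k x)).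
    exact: measurable_cst.
  by apply: measurable_funM; [exact: measurable_cst | exact: mW].
Qed.


Let mLc c : measurable_fun [set: g_sigma_algebraType G] (Lc c).
Proof.
apply: measurable_funD.
  by apply: measurable_funB; apply: mCE.
apply: measurable_sum => k.
by apply: measurable_funM; [exact: measurable_cst | exact: mW].
Qed.

Let claim1 c : {ae mu, forall x, Bc c x -> Lc c x <= eps * K * Q x}.
Proof.
set E := Bc c `&` [set x | eps * K * Q x < Lc c x].
have GE : G E.
  apply/(gsetE sG); apply: measurableI; first exact/(gsetE sG)/GBc.
  apply/(gsetE sG).
  apply: (@gset_lt _ _ _ _ sG (fun x => eps * K * Q x) (Lc c)); last exact: mLc.
  by apply: measurable_funM; [exact: measurable_cst | apply: mCE; exact: iQ].
have mE := subG GE.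
have cXl := condexp_EqI subG (hCE iXl) iXl GE.
have cXu := condexp_EqI subG (hCE iXu) iXu GE.
have cbl k := condexp_EqI subG (hCE (iB k iXl)) (iB k iXl) GE.
have cbu k := condexp_EqI subG (hCE (iB k iXu)) (iB k iXu) GE.
have cQ := condexp_EqI subG (hCE iQ) iQ GE.
have H := EqI_sub mE (EqI_add mE (EqI_sub mE cXl cXu)
  (EqI_sum (index_enum 'I_Dn) mE
    (fun k => EqI_scale (lam c k) mE (EqI_sub mE (cbl k) (cbu k)))))
  (EqI_scale (eps * K) mE cQ).
pose u := fun x => Lc c x - eps * K * Q x.
pose hh := fun x => (Xl x - Xu x) +
  \sum_(k < Dn) lam c k * (b k x * Xl x - b k x * Xu x) - eps * K * `|Xl x - Xu x|.
have [iu ih eq] : EqI mu E u hh by apply: EqI_ext H.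
have [i0 _ _] := EqI0 mu E.
have le0 : (\int[mu]_(x in E) (hh x)%:E <= 0)%E.
  apply: le_trans (ae_le_int mE ih i0 _) _; last by rewrite integral0.
  apply: filterS2 hD hab => x hDx hs [[Ax hc] _].
  rewrite /hh /K.
  apply: (@alg_h _ _ eps Dl Cp (Xl x) (Xu x) (lam c) (fun k => b k x) (fun k => a k x)) => //.
  - exact: normr_ge0.
  - exact: hDx.
  - by move=> k; apply: le_trans (hC k x) _; exact: ler_norm.
  - move=> k; have [[h1 h2] h3] := hc k I.
    rewrite /lam normrM /ss; case: (c k).2; rewrite ?normrN normr1 mulr1;
      apply: abs_cell => //; rewrite ?mulr_ge0 //; try exact: ltW;
      by rewrite mulrDr mulr1 in h2.
have mu_ : measurable_fun E u.
  by apply/measurable_EFinP; exact: measurable_int iu.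
have le0' : (\int[mu]_(x in E) (u x)%:E <= 0)%E by rewrite eq.
have := null_pos mE mu_ _ le0'.
move=> /(_ _) h; have {}h : {ae mu, forall x, ~ E x}.
  by apply: h => x [_ /= hlt]; rewrite /u subr_gt0.
apply: filterS h => x nE Bx; rewrite leNgt; apply/negP => hlt; exact: nE.
Qed.

Let fl_facts (t : R) : eps * (Num.floor (t / eps))%:~R <= t /\
  t < eps * ((Num.floor (t / eps))%:~R + 1).
Proof.
have fl1 := floor_le (t / eps); have fl2 := floorD1_gt (t / eps).
rewrite intrD in fl2.
have et : t = eps * (t / eps) by rewrite mulrC divfK ?gt_eqF.
split.
  rewrite [leRHS]et; move: fl1; set q := t / eps; set f := _%:~R.
  by move=> hf; apply: ler_wpM2l => //; exact: ltW.
rewrite [ltLHS]et; move: fl2; set q := t / eps; set f := _%:~R.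
by move=> hf; rewrite ltr_pM2l.
Qed.

Lemma key_step : {ae mu, forall x, A x -> (CE Xl x - CE Xu x) +
  Dl * \sum_(k < Dn) a k x * `|W k x| <= eps * (K * Q x + \sum_(k < Dn) `|W k x|)}.
Proof.
have h := ae_countable claim1.
apply: filterS h => x hx Ax.
pose c : cellT := [ffun k => (Num.floor (Dl * a k x / eps), 0 <= W k x)].
have Bx : Bc c x.
  split => // k _; rewrite /cellk /vv /ss ffunE /=.
  have [f1 f2] := fl_facts (Dl * a k x).
  split; first by split.
  case: ifP => h; first by rewrite mul1r.
  by move/negbT: h; rewrite -ltNge => h; rewrite mulN1r oppr_ge0 ltW.
have hL := hx c Bx.
have hsum : Dl * \sum_(k < Dn) a k x * `|W k x| <=
    \sum_(k < Dn) lam c k * W k x + eps * \sum_(k < Dn) `|W k x|.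
  rewrite !mulr_sumr -big_split /=; apply: ler_sum => k _.
  rewrite /lam /vv /ss ffunE /=.
  have [f1 f2] := fl_facts (Dl * a k x).
  set v := (Num.floor _)%:~R in f1 f2 *.
  have aW := a_ge0 k x.
  case: ifP => h.
    rewrite ger0_norm // mulr1; have := normr_ge0 (W k x); nra.
  move/negbT: h; rewrite -ltNge => h.
  rewrite ltr0_norm //; nra.
rewrite /Lc in hL.
rewrite mulrDr mulrA; lra.
Qed.

End cell.
Lemma ae_and2 (P1 P2 : T -> Prop) : {ae mu, forall x, P1 x} -> {ae mu, forall x, P2 x} ->
  {ae mu, forall x, P1 x /\ P2 x}.
Proof. by move=> h1 h2; apply: filterS2 h1 h2 => x. Qed.

Lemma step_main (yl yu a0 : T -> R) (g : R -> ('I_Dn -> R) -> T -> R) (S : T -> \bar R) :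
  {ae mu, forall x, a0 x < 1 / Dl} ->
  (forall x y y' (z z' : 'I_Dn -> R), `|g y z x - g y' z' x| <=
     a0 x * `|y - y'| + \sum_(k < Dn) a k x * `|z k - z' k|) ->
  {ae mu, forall x, A x -> (maxe (S x) (CE Xu x + g (yu x)
     (fun k => CE (fun y => b k y * Xu y) x) x * Dl)%:E <= (yu x)%:E)%E} ->
  {ae mu, forall x, A x -> ((yl x)%:E <= maxe (S x) (CE Xl x + g (yl x)
     (fun k => CE (fun y => b k y * Xl y) x) x * Dl)%:E)%E} ->
  {ae mu, forall x, A x -> yl x <= yu x}.
Proof.
move=> ha0 hg hup hlow.
have hk : {ae mu, forall x, forall j : nat, A x -> (CE Xl x - CE Xu x) +
    Dl * \sum_(k < Dn) a k x * `|W k x| <=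
    j.+1%:R^-1 * (K * Q x + \sum_(k < Dn) `|W k x|)}.
  apply: ae_foralln => j; apply: key_step.
  by rewrite invr_gt0 ltr0n.
have := ae_and2 (ae_and2 hk ha0) (ae_and2 hup hlow).
apply: filterS => x [[hkx hax] [hux hlx]] Ax.
rewrite leNgt; apply/negP => ylu.
move: (hux Ax); rewrite ge_max => /andP[hS]; rewrite lee_fin => hcu.
have hcl : yl x <= CE Xl x + g (yl x) (fun k => CE (fun y => b k y * Xl y) x) x * Dl.
  move: (hlx Ax); rewrite le_max => /orP[h|]; last by rewrite lee_fin.
  have := le_trans h hS; rewrite lee_fin => h2.
  by move: ylu; rewrite ltNge h2.
set gl := g (yl x) _ x in hcl; set gu := g (yu x) _ x in hcu.
have hL := hg x (yl x) (yu x) (fun k => CE (fun y => b k y * Xl y) x)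
  (fun k => CE (fun y => b k y * Xu y) x).
rewrite -/gl -/gu in hL.
have hL2 : gl - gu <= a0 x * `|yl x - yu x| + \sum_(k < Dn) a k x * `|W k x|.
  exact: le_trans (ler_norm _) hL.
rewrite gtr0_norm ?subr_gt0 // in hL2.
have hDa : Dl * a0 x < 1.
  have := ltr_pM2l Dl_gt0 (a0 x) (1 / Dl); rewrite hax => /esym.
  by rewrite div1r mulfV ?gt_eqF.
set M := K * Q x + \sum_(k < Dn) `|W k x|.
set sW := \sum_(k < Dn) a k x * `|W k x| in hL2 hkx.
set t := (1 - Dl * a0 x) * (yl x - yu x).
have ht : 0 < t by rewrite /t mulr_gt0 // subr_gt0.
have hN := truncnS_gt (M / t).
have := hkx (Num.Def.trunc (M / t)) Ax.
move: hN; set N := (Num.Def.trunc (M / t)).+1%:R => hN hkN.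
have N0 : 0 < N by rewrite /N ltr0n.
have hlt : N^-1 * M < t.
  rewrite mulrC ltr_pdivrMr // ; rewrite ltr_pdivrMr // in hN.
  by rewrite mulrC.
have : t <= N^-1 * M.
  apply: le_trans hkN; rewrite /t.
  have := ltW Dl_gt0; nra.
by rewrite leNgt hlt.
Qed.

End step.
Unset Implicit Arguments. Set Strict Implicit. Set Printing Implicit Defensive.

Theorem proposition2p2
  (d : measure_display) (T : measurableType d) (R : realType)
  (mu : probability T R) (n D : nat)
  (F : nat -> set (set T))
  (CE : nat -> (T -> R) -> T -> R)
  (Delta : nat -> R)
  (S : nat -> T -> \bar R)
  (f : nat -> R -> ('I_D -> R) -> T -> R)
  (alpha0 : nat -> T -> R) (alpha : 'I_D -> nat -> T -> R)
  (beta : nat -> 'I_D -> T -> R)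
  (sigma tau : T -> nat)
  (Yup Ylow : nat -> T -> R) :
  (1 <= n)%N -> (1 <= D)%N ->
  filtration n F ->
  (* CE i X is a version of E_i[X] = E[X | F_i] for every integrable X *)
  (forall i (X : T -> R), (i <= n)%N -> mu.-integrable setT (EFin \o X) ->
     is_condexp mu (F i) X (CE i X)) ->
  (forall i, (i < n)%N -> 0 < Delta i) ->
  (* the obstacle S *)
  (forall i, (i <= n)%N -> emeasurable_wrt (F i) (S i)) ->
  (forall i x, S i x != +oo%E) ->
  (forall x, S n x \is a fin_num) ->
  (forall i, (i < n)%N ->
     mu.-integrable setT (fun x => if S i x == -oo%E then 0%E else S i x)) ->
  mu.-integrable setT (S n) ->
  (* the driver f *)
  (forall i y z, (i < n)%N -> measurable_wrt (F i) (f i y z)) ->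
  (forall i, (i < n)%N -> mu.-integrable setT (EFin \o f i 0 (fun _ => 0))) ->
  (forall i, (i < n)%N -> measurable_wrt (F i) (alpha0 i) /\ (forall x, 0 <= alpha0 i x)) ->
  (forall k i, (i < n)%N -> measurable_wrt (F i) (alpha k i) /\ (forall x, 0 <= alpha k i x)) ->
  (forall i x y y' (z z' : 'I_D -> R), (i < n)%N ->
     `|f i y z x - f i y' z' x| <=
       alpha0 i x * `|y - y'| + \sum_(k < D) alpha k i x * `|z k - z' k|) ->
  (* the bounded adapted process beta = (beta_i)_{i=1..n} *)
  (forall i k, (1 <= i <= n)%N -> measurable_wrt (F i) (beta i k)) ->
  (exists C : R, forall i k x, (1 <= i <= n)%N -> `|beta i k x| <= C) ->
  (forall i, (i < n)%N ->
     {ae mu, forall x, alpha0 i x < 1 / Delta i /\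
        \sum_(k < D) alpha k i x * `|beta i.+1 k x| <= 1 / Delta i}) ->
  (* stopping times sigma <= tau *)
  stopping_time n F sigma -> stopping_time n F tau ->
  (forall x, (sigma x <= tau x)%N) ->
  (* adapted integrable processes Yup, Ylow *)
  (forall i, (i <= n)%N -> measurable_wrt (F i) (Yup i) /\
     mu.-integrable setT (EFin \o Yup i)) ->
  (forall i, (i <= n)%N -> measurable_wrt (F i) (Ylow i) /\
     mu.-integrable setT (EFin \o Ylow i)) ->
  (forall i, {ae mu, forall x, (sigma x <= i < tau x)%N ->
     (maxe (S i x)
        (CE i (Yup i.+1) x +
         f i (Yup i x) (fun k => CE i (fun y => beta i.+1 k y * Yup i.+1 y) x) x
           * Delta i)%:E <= (Yup i x)%:E)%E}) ->
  (forall i, {ae mu, forall x, (sigma x <= i < tau x)%N ->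
     ((Ylow i x)%:E <= maxe (S i x)
        (CE i (Ylow i.+1) x +
         f i (Ylow i x) (fun k => CE i (fun y => beta i.+1 k y * Ylow i.+1 y) x) x
           * Delta i)%:E)%E}) ->
  {ae mu, forall x, Ylow (tau x) x <= Yup (tau x) x} ->
  forall i, (i <= n)%N ->
    {ae mu, forall x, (sigma x <= i <= tau x)%N -> Ylow i x <= Yup i x}.
Proof.
move=> n1 D1 [hF1 hF2] hCE hDel hSm hSoo hSn hSi hSni hfm hfi ha0m ham hLip hbm [C hC] hab
  [_ hsig] [htaun htau] hst hYu hYl hup hlow htauY.
pose P i := {ae mu, forall x, (sigma x <= i <= tau x)%N -> Ylow i x <= Yup i x}.
have fromQ i : {ae mu, forall x, (sigma x <= i < tau x)%N -> Ylow i x <= Yup i x} -> P i.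
  move=> hQ; apply: filterS2 hQ htauY => x hq ht /andP[s1 s2].
  move: s2; rewrite leq_eqVlt => /orP[/eqP e|s2]; first by rewrite e.
  by apply: hq; rewrite s1 s2.
have Pstep i : (i < n)%N -> P i.+1 -> P i.
  move=> lin Pi1; apply: fromQ.
  have lein : (i <= n)%N by exact: ltnW.
  have [sG subG] := hF1 i lein.
  pose A := [set x | (sigma x <= i < tau x)%N].
  have GA : F i A.
    apply/(gsetE sG).
    have -> : A = [set x | (sigma x <= i)%N] `&` ~` [set x | (tau x <= i)%N].
      apply/seteqP; split => x /=.
        by move=> /andP[h1 h2]; split => //; rewrite leqNgt h2.
      by move=> [h1 h2]; apply/andP; split => //; rewrite ltnNge; exact/negP.
    apply: measurableI; first exact/(gsetE sG)/hsig.
    by apply: measurableC; exact/(gsetE sG)/htau.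
  have lei1 : (i.+1 <= n)%N by [].
  have [sG1 subG1] := hF1 i.+1 lei1.
  have hD : {ae mu, forall x, A x -> Ylow i.+1 x <= Yup i.+1 x}.
    apply: filterS Pi1 => x h /andP[h1 h2]; apply: h.
    by rewrite h2 andbT; exact: leqW.
  have hbi : (1 <= i.+1 <= n)%N by [].
  have := @step_main d T R mu (F i) sG subG (CE i) (fun X hX => hCE i X lein hX)
    D A GA (Ylow i.+1) (Yup i.+1) (hYl i.+1 lei1).2 (hYu i.+1 lei1).2 hD
    (beta i.+1) (fun k => wrt_meas subG1 (hbm i.+1 k hbi)) C
    (fun k x => hC i.+1 k x hbi)
    (fun k => alpha k i) (fun k => (ham k i lin).1) (fun k => (ham k i lin).2)
    (Delta i) (hDel i lin).
  move=> h.
  have hab2 : {ae mu, forall x, \sum_(k < D) alpha k i x * `|beta i.+1 k x| <= 1 / Delta i}.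
    by apply: filterS (hab i lin) => x [].
  have ha02 : {ae mu, forall x, alpha0 i x < 1 / Delta i}.
    by apply: filterS (hab i lin) => x [].
  exact: (h hab2 (Ylow i) (Yup i) (alpha0 i) (f i) (S i) ha02
    (fun x y y' z z' => hLip i x y y' z z' lin) (hup i) (hlow i)).
have Pn : P n.
  apply: fromQ; apply: aeW => x /andP[_ h].
  by have := htaun x; rewrite leqNgt h.
have Pk k : (k <= n)%N -> P (n - k)%N.
  elim: k => [_|k IH hk]; first by rewrite subn0.
  have e : ((n - k.+1).+1 = n - k)%N by rewrite subnSK.
  apply: Pstep; first by rewrite ltn_subrL; apply/andP; split.
  by rewrite e; apply: IH; exact: ltnW.
move=> i hi; rewrite -(subKn hi); apply: Pk; exact: leq_subr.
Qed.
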